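(* In the biased planner's myopic problem described in the context, for every $b\in[1-p,0.5]$, $\pi^0_B(b)\in\{p,1-b\}$.
   Context: A binary state $\omega\in\{G,B\}$; for an agent with public belief $b$ and private signal precision $q\in[0.5,1]$ (signal matches $\omega$ with probability $q$), the action is the signal if $1-q\le b\le q$, $G$ if $b>q$, $B$ if $b<1-q$. Let $z(b,q)=b+q-2bq$. The biased planner has baseline precision $p\in[0.5,1)$, cost $\beta:[0,1]\to[0,\infty)$ non-negative, increasing, continuous, concave with $\beta(0)=0$, and $C>0$; its instantaneous reward is $r_B(b,q)=-\beta(|q-p|)-Cz(b,q)$ if $q\ge\max(b,1-b)$, $-\beta(|q-p|)-C$ if $b<1-q$, and $-\beta(|q-p|)$ if $b>q$. The myopic optimal precision $\pi^0_B(b)$ is a maximizer of $q\mapsto r_B(b,q)$ over $[0.5,1]$. *)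

(* Defs.v *)
From Stdlib Require Import Reals.
Open Scope R_scope.

Definition zfun (b q : R) : R := b + q - 2 * b * q.

Definition rB (beta : R -> R) (p C b q : R) : R :=
  if Rlt_dec b (1 - q) then - beta (Rabs (q - p)) - C
  else if Rlt_dec q b then - beta (Rabs (q - p))
  else - beta (Rabs (q - p)) - C * zfun b q.

Definition nonneg_on01 (beta : R -> R) : Prop :=
  forall x, 0 <= x <= 1 -> 0 <= beta x.

Definition increasing_on01 (beta : R -> R) : Prop :=
  forall x y, 0 <= x <= 1 -> 0 <= y <= 1 -> x <= y -> beta x <= beta y.

Definition continuous_on01 (beta : R -> R) : Prop :=
  forall x, 0 <= x <= 1 ->
    forall eps, 0 < eps -> exists delta, 0 < delta /\
      forall y, 0 <= y <= 1 -> Rabs (y - x) < delta -> Rabs (beta y - beta x) < eps.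

Definition concave_on01 (beta : R -> R) : Prop :=
  forall x y t, 0 <= x <= 1 -> 0 <= y <= 1 -> 0 <= t <= 1 ->
    t * beta x + (1 - t) * beta y <= beta (t * x + (1 - t) * y).

Definition cost_ok (beta : R -> R) : Prop :=
  nonneg_on01 beta /\ increasing_on01 beta /\ continuous_on01 beta /\
  concave_on01 beta /\ beta 0 = 0.

Definition myopic_opt (beta : R -> R) (p C b q : R) : Prop :=
  1/2 <= q <= 1 /\
  forall q', 1/2 <= q' <= 1 -> rB beta p C b q' <= rB beta p C b q.

(* Main.v *)
Require Import Defs.
From Stdlib Require Import Reals Lra Psatz.
Open Scope R_scope.

Theorem lemma13 (p C : R) (beta : R -> R)
  (hp : 1/2 <= p < 1) (hbeta : cost_ok beta) (hC : 0 < C) :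
  forall b : R, 1 - p <= b <= 1/2 ->
    exists q : R, (q = p \/ q = 1 - b) /\ myopic_opt beta p C b q.
Proof.
  intros b hb.
  destruct hbeta as [hnn [hinc [_ [hconc h0]]]].
  assert (Ep : rB beta p C b p = - C * zfun b p).
  { unfold rB. destruct (Rlt_dec b (1 - p)); [lra|].
    destruct (Rlt_dec p b); [lra|].
    replace (p - p) with 0 by ring. rewrite Rabs_R0, h0. ring. }
  assert (Eb : rB beta p C b (1 - b) = - beta (p - (1 - b)) - C * zfun b (1 - b)).
  { unfold rB. destruct (Rlt_dec b (1 - (1 - b))); [lra|].
    destruct (Rlt_dec (1 - b) b); [lra|].
    rewrite Rabs_minus_sym, Rabs_right by lra. ring. }
  set (A := rB beta p C b p). set (B := rB beta p C b (1 - b)).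
  assert (key : forall q', 1/2 <= q' <= 1 -> rB beta p C b q' <= A \/ rB beta p C b q' <= B).
  { intros q' hq'.
    destruct (Rlt_dec q' (1 - b)) as [h1|h1].
    - right. unfold B. rewrite Eb. unfold rB.
      destruct (Rlt_dec b (1 - q')); [|lra].
      rewrite Rabs_minus_sym, Rabs_right by lra.
      assert (beta (p - (1 - b)) <= beta (p - q')) by (apply hinc; lra).
      assert (zfun b (1 - b) <= 1) by (unfold zfun; nra).
      nra.
    - assert (Eq : rB beta p C b q' = - beta (Rabs (q' - p)) - C * zfun b q').
      { unfold rB. destruct (Rlt_dec b (1 - q')); [lra|].
        destruct (Rlt_dec q' b); [lra|]. reflexivity. }
      rewrite Eq.
      destruct (Rle_dec q' p) as [h2|h2].
      + rewrite Rabs_minus_sym, Rabs_right by lra.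
        destruct (Req_dec p (1 - b)) as [he|he].
        * right. unfold B. rewrite Eb.
          replace q' with (1 - b) by lra. lra.
        * set (d := p - (1 - b)).
          assert (hd : 0 < d) by (unfold d; lra).
          set (t := (p - q') / d).
          assert (ht : 0 <= t <= 1).
          { unfold t; split.
            - apply Rmult_le_pos; [lra| left; apply Rinv_0_lt_compat; lra].
            - apply Rmult_le_reg_r with d; [lra|]. unfold Rdiv.
              rewrite Rmult_assoc, Rinv_l by (apply Rgt_not_eq; lra). unfold d; lra. }
          assert (hpq : p - q' = t * d + (1 - t) * 0).
          { unfold t, Rdiv. field. lra. }
          assert (hd1 : 0 <= d <= 1) by (unfold d; lra).
          assert (h00 : 0 <= 0 <= 1) by lra.
          assert (hc := hconc d 0 t hd1 h00 ht).
          rewrite h0, <- hpq in hc.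
          assert (hz : zfun b q' = t * zfun b (1 - b) + (1 - t) * zfun b p).
          { unfold zfun. assert (q' = t * (1 - b) + (1 - t) * p).
            { unfold t, Rdiv. unfold d in *. field. lra. }
            rewrite H at 1 2. ring. }
          rewrite hz.
          assert (HA : A = - C * zfun b p) by exact Ep.
          assert (HB : B = - beta d - C * zfun b (1 - b)) by exact Eb.
          assert (HL : t * B + (1 - t) * A = - t * beta d - C * (t * zfun b (1 - b) + (1 - t) * zfun b p))
            by (rewrite HA, HB; ring).
          destruct (Rle_dec A B) as [hAB|hAB].
          -- right. assert (0 <= (1 - t) * (B - A)) by (apply Rmult_le_pos; lra). nra.
          -- left. assert (0 <= t * (A - B)) by (apply Rmult_le_pos; lra). nra.
      + left. unfold A. rewrite Ep.
        rewrite Rabs_right by lra.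
        assert (0 <= beta (q' - p)) by (apply hnn; lra).
        assert (zfun b p <= zfun b q') by (unfold zfun; nra).
        nra. }
  destruct (Rle_dec B A) as [hBA|hBA].
  - exists p. split; [left; reflexivity|]. split; [lra|].
    intros q' hq'. destruct (key q' hq'); fold A; lra.
  - exists (1 - b). split; [right; reflexivity|]. split; [lra|].
    intros q' hq'. destruct (key q' hq'); fold B; lra.
Qed.
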